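(* Let $G$ be a connected nontrivial graph with $m$ vertices and let $n\geq3$. If $\min\{3n\lambda(G),\ 2(m+2e(G))\}> 6\delta(G)+2$, then $G\boxtimes C_n$ is super restricted edge-connected.
   Context: All graphs are finite, simple and undirected; ''nontrivial'' means having at least two vertices. $C_n$ denotes the cycle on $n$ vertices. For a graph $G$: $e(G)=|E(G)|$; $\delta(G)$ is the minimum degree; $\lambda(G)$ is the edge-connectivity. A restricted edge-cut of a connected graph $G$ is a set $S\subseteq E(G)$ such that $G-S$ is disconnected and every component of $G-S$ has at least $2$ vertices; $\lambda'(G)$ is the minimum cardinality of a restricted edge-cut. A graph is super restricted edge-connected if every minimum restricted edge-cut $S$ isolates an edge, i.e. some component of $G-S$ consists of exactly two (adjacent) vertices. The strong product $G\boxtimes H$ has vertex set $V(G)\times V(H)$, with $(x_1,y_1)$ and $(x_2,y_2)$ adjacent iff either $x_1=x_2$ and $y_1y_2\in E(H)$, or $y_1=y_2$ and $x_1x_2\in E(G)$, or $x_1x_2\in E(G)$ and $y_1y_2\in E(H)$. *)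

(* Defs.v *)
From mathcomp Require Import all_boot.
Set Implicit Arguments. Unset Strict Implicit. Unset Printing Implicit Defensive.

Section Graphs.
Variable T : finType.
Implicit Types (e : rel T) (S : {set {set T}}).

Definition simple_graph e := symmetric e /\ irreflexive e.

Definition edges e : {set {set T}} := [set [set p.1; p.2] | p : T * T & e p.1 p.2].

Definition num_edges e := #|edges e|.

(* degree and minimum degree delta(G) (T nonempty in use; #|T| is a dummy upper bound) *)
Definition degree e x := #|[set y | e x y]|.
Definition min_degree e := \big[minn/#|T|]_(x : T) degree e x.

Definition del_edges e S : rel T := [rel x y | e x y && ([set x; y] \notin S)].

Definition connectedb e := [forall x, [forall y, connect e x y]].

Definition is_edge_cut e S := (S \subset edges e) && ~~ connectedb (del_edges e S).

(* lambda(G): minimum size of an edge-cut (E(G) itself is one for nontrivial G) *)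
Definition edge_conn e := \big[minn/#|edges e|]_(S | is_edge_cut e S) #|S|.

Definition is_restricted_edge_cut e S :=
  is_edge_cut e S &&
  [forall x, [exists y, (y != x) && connect (del_edges e S) x y]].

Definition super_restricted_edge_connected e :=
  forall S, is_restricted_edge_cut e S ->
    (forall S', is_restricted_edge_cut e S' -> #|S| <= #|S'|) ->
    exists x y, [/\ x != y, e x y &
      [set z | connect (del_edges e S) x z] = [set x; y]].
End Graphs.

(* the cycle C_n on 'I_n (meant for n >= 3) *)
Definition cycle_rel (n : nat) : rel 'I_n :=
  [rel i j | (val j == (val i).+1 %% n) || (val i == (val j).+1 %% n)].

Definition strong_prod (T U : finType) (e : rel T) (f : rel U) : rel (T * U) :=
  [rel u v | (u != v) && ((u.1 == v.1) || e u.1 v.1) && ((u.2 == v.2) || f u.2 v.2)].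
Arguments cycle_rel n : clear implicits.

(* Main.v *)
Require Import Defs.
From mathcomp Require Import all_boot zify.
Set Implicit Arguments. Unset Strict Implicit. Unset Printing Implicit Defensive.

Section Cyc.
Variable n : nat.
Hypothesis n3 : 3 <= n.

Lemma n_pos : 0 < n. Proof. by apply: leq_trans n3. Qed.

Definition sc (i : 'I_n) : 'I_n := Ordinal (ltn_pmod i.+1 n_pos).
Definition pc (i : 'I_n) : 'I_n := Ordinal (ltn_pmod (i + n.-1) n_pos).

Lemma sc_val (i : 'I_n) : val (sc i) = if i.+1 == n then 0 else i.+1.
Proof.
rewrite /=; case: eqP => [->|h]; first by rewrite modnn.
by rewrite modn_small //; have := ltn_ord i; lia.
Qed.

Lemma pc_val (i : 'I_n) : val (pc i) = if val i == 0 then n.-1 else (val i).-1.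
Proof.
case: i => k hk /=; case: eqP => [->|h].
  by rewrite add0n modn_small //; have := n_pos; lia.
have -> : k + n.-1 = k.-1 + n by have := n_pos; lia.
by rewrite modnDr modn_small //; lia.
Qed.

Lemma scK : cancel sc pc.
Proof.
move=> i; apply: val_inj; rewrite pc_val sc_val; case: i => k hk /=.
by case: (k.+1 =P n) => h /=; lia.
Qed.

Lemma pcK : cancel pc sc.
Proof.
move=> i; apply: val_inj; rewrite sc_val pc_val; case: i => k hk /=.
have := n_pos; case: (k =P 0) => h /= np; case: eqP => h2 /=; lia.
Qed.

Lemma sc_inj : injective sc. Proof. exact: can_inj scK. Qed.
Lemma pc_inj : injective pc. Proof. exact: can_inj pcK. Qed.

Lemma sc_neq (i : 'I_n) : sc i != i.
Proof.
apply/eqP => /(congr1 val); rewrite sc_val; have := ltn_ord i; have := n3.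
case: eqP => /= h; lia.
Qed.

Lemma pc_neq (i : 'I_n) : pc i != i.
Proof. apply/eqP => h; have := sc_neq (pc i); by rewrite pcK {1}h eqxx. Qed.

Lemma sc_pc_neq (i : 'I_n) : sc i != pc i.
Proof.
apply/eqP => /(congr1 val); rewrite sc_val pc_val; have := ltn_ord i; have := n3.
case: eqP => /= h1; case: eqP => /= h2; lia.
Qed.

Lemma cycle_relE (i j : 'I_n) : cycle_rel n i j = (j == sc i) || (j == pc i).
Proof.
rewrite /cycle_rel /=; congr orb.
have -> : (val i == (val j).+1 %% n) = (i == sc j) by [].
apply/eqP/eqP => [->|->]; first by rewrite scK.
by rewrite pcK.
Qed.


Lemma iter_sc_val (k : 'I_n) m : val (iter m sc k) = (k + m) %% n.
Proof.
elim: m => [|m IH] /=; first by rewrite addn0 modn_small.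
by rewrite IH addnS -addn1 modnDml addn1.
Qed.

Lemma sc_propagate (P : pred 'I_n) (k : 'I_n) :
  (forall i, P i -> P (sc i)) -> P k -> forall j, P j.
Proof.
move=> H Pk j.
have Hm : forall m, P (iter m sc k) by elim=> //= m IH; exact: H.
have -> : j = iter (j + (n - k)) sc k.
  apply: val_inj; rewrite iter_sc_val.
  have -> : k + (j + (n - k)) = j + n by have := ltn_ord k; lia.
  by rewrite modnDr modn_small.
exact: Hm.
Qed.

Definition adj (i j : 'I_n) := (i == j) || cycle_rel n i j.

Lemma sum3_ge (f : 'I_n -> nat) a b c :
  a != b -> a != c -> b != c -> f a + f b + f c <= \sum_j f j.
Proof.
move=> ab ac bc.
rewrite (bigD1 a) //= (bigD1 b) 1?eq_sym //= (bigD1 c) /=; last by rewrite eq_sym ac eq_sym bc.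
by rewrite !addnA leq_addr.
Qed.

Lemma sum2_ge (f : 'I_n -> nat) a b :
  a != b -> f a + f b <= \sum_j f j.
Proof.
move=> ab.
rewrite (bigD1 a) //= (bigD1 b) 1?eq_sym //=.
by rewrite !addnA leq_addr.
Qed.

Lemma sum_sc (F : 'I_n -> nat) : \sum_i F (sc i) = \sum_i F i.
Proof. by rewrite [RHS](reindex_inj sc_inj). Qed.

Lemma sum_pc (F : 'I_n -> nat) : \sum_i F (pc i) = \sum_i F i.
Proof. by rewrite [RHS](reindex_inj pc_inj). Qed.

Definition TT (J K : pred 'I_n) := \sum_i \sum_j ((J i && ~~ K j && adj i j) : nat).
Definition vv (J : pred 'I_n) := \sum_i ((J i != J (sc i)) : nat).

Lemma adj_refl i : adj i i. Proof. by rewrite /adj eqxx. Qed.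
Lemma adj_sc i : adj i (sc i). Proof. by rewrite /adj cycle_relE eqxx orbT. Qed.
Lemma adj_pc i : adj i (pc i). Proof. by rewrite /adj cycle_relE eqxx !orbT. Qed.

Lemma TT_ge J K : \sum_i ((J i && ~~ K i) + (J i && ~~ K (sc i)) + (J i && ~~ K (pc i)))
   <= TT J K.
Proof.
apply: leq_sum => i _.
have := sum3_ge (fun j => ((J i && ~~ K j && adj i j) : nat))
  (a:=i) (b:=sc i) (c:=pc i).
rewrite /= adj_refl adj_sc adj_pc !andbT; apply.
- by rewrite eq_sym sc_neq.
- by rewrite eq_sym pc_neq.
- exact: sc_pc_neq.
Qed.

Lemma c_ge J K : \sum_i ((J i != K i) + (J i != K (sc i)) + (J (sc i) != K i))
   <= TT J K + TT K J.
Proof.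
apply: leq_trans (leq_add (TT_ge J K) (TT_ge K J)).
rewrite -big_split /=.
have E1 : \sum_i ((K i && ~~ J (pc i)) : nat) = \sum_i ((K (sc i) && ~~ J i) : nat).
  by rewrite -sum_sc; apply: eq_bigr => i _; rewrite scK.
have E2 : \sum_i ((J i && ~~ K (pc i)) : nat) = \sum_i ((J (sc i) && ~~ K i) : nat).
  by rewrite -sum_sc; apply: eq_bigr => i _; rewrite scK.
rewrite !big_split /= E1 E2 -!big_split /=.
apply: leq_sum => i _.
by case: (J i); case: (K i); case: (J (sc i)); case: (K (sc i)).
Qed.


Lemma top_ex (J : pred 'I_n) : (exists i, J i) -> (exists j, ~~ J j) ->
  exists i, J i && ~~ J (sc i).
Proof.
move=> [k Jk] [j Jj]; case: (pickP (fun i => J i && ~~ J (sc i))) => [i Hi|H].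
  by exists i.
have HJ : forall i, J i -> J (sc i).
  by move=> i Ji; have := H i; rewrite /= Ji /=; move/negbFE.
by have := sc_propagate HJ Jk j; rewrite (negbTE Jj).
Qed.

Lemma bot_ex (J : pred 'I_n) : (exists i, J i) -> (exists j, ~~ J j) ->
  exists i, ~~ J i && J (sc i).
Proof.
move=> [k Jk] [j Jj]; case: (pickP (fun i => ~~ J i && J (sc i))) => [i Hi|H].
  by exists i.
have HJ : forall i, ~~ J i -> ~~ J (sc i).
  by move=> i Ji; have := H i; rewrite /= Ji /= => ->.
by have := sc_propagate (P := fun i => ~~ J i) HJ Jj k; rewrite Jk.
Qed.

Lemma vv_ge2 (J : pred 'I_n) : (exists i, J i) -> (exists j, ~~ J j) -> 2 <= vv J.
Proof.
move=> h1 h2; have [a /andP[Ja Ja']] := top_ex h1 h2.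
have [b /andP[Jb Jb']] := bot_ex h1 h2.
have ab : a != b by apply/eqP => eab; move: Jb; rewrite -eab Ja.
have := sum2_ge (fun i => ((J i != J (sc i)) : nat)) ab.
by rewrite /= Ja (negbTE Ja') (negbTE Jb) Jb'.
Qed.

Lemma sum_eq0_pt (F : 'I_n -> nat) : \sum_i F i = 0 -> forall i, F i = 0.
Proof.
move=> H i; apply/eqP; rewrite -leqn0 -H.
by rewrite (bigD1 i) //= leq_addr.
Qed.

Lemma c_ge3 (J K : pred 'I_n) : (exists i, J i) -> (exists j, ~~ J j) ->
  3 <= TT J K + TT K J.
Proof.
move=> h1 h2; apply: leq_trans (c_ge J K).
set al := \sum_i ((J i != K i) : nat).
set be := \sum_i ((J i != K (sc i)) : nat).
set ga := \sum_i ((J (sc i) != K i) : nat).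
have -> : \sum_i ((J i != K i) + (J i != K (sc i)) + (J (sc i) != K i)) = al + be + ga.
  by rewrite !big_split.
have vab : vv J <= al + be.
  rewrite /al -(sum_sc (fun i => ((J i != K i) : nat))) /be -big_split /=.
  apply: leq_sum => i _.
  by case: (J i); case: (K i); case: (J (sc i)); case: (K (sc i)).
have vag : vv J <= al + ga.
  rewrite /al /ga -big_split /=; apply: leq_sum => i _.
  by case: (J i); case: (K i); case: (J (sc i)); case: (K (sc i)).
set v2 := \sum_i ((J i != J (sc (sc i))) : nat).
have vbg : v2 <= be + ga.
  rewrite /ga -(sum_sc (fun i => ((J (sc i) != K i) : nat))) /be -big_split /=.
  apply: leq_sum => i _.
  by case: (J i); case: (K (sc i)); case: (J (sc (sc i))).
have v2ge := vv_ge2 h1 h2.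
case: (posnP v2) => [v20|v2pos]; last by lia.
have E : forall i, J (sc (sc i)) = J i.
  move=> i; have := sum_eq0_pt v20 i.
  by case: (J i); case: (J (sc (sc i))).
have [a /andP[Ja Ja']] := top_ex h1 h2.
have W : forall j, J j != J (sc j).
  apply: (sc_propagate (k := a)); last by rewrite Ja.
  by move=> i; rewrite E eq_sym.
have : vv J = n.
  rewrite /vv (eq_bigr (fun=> 1)); last by move=> i _; rewrite W.
  by rewrite sum_nat_const card_ord muln1.
by move: n3; lia.
Qed.

Lemma TT_empty (J K : pred 'I_n) : (forall j, ~~ K j) ->
  3 * \sum_i (J i : nat) <= TT J K.
Proof.
move=> HK; apply: leq_trans (TT_ge J K).
rewrite big_distrr /=; apply: leq_sum => i _.
by rewrite !HK !andbT; case: (J i).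
Qed.

Lemma vv_le (J : pred 'I_n) :
  vv J <= \sum_i \sum_j ((J i && ~~ J j && cycle_rel n i j) : nat).
Proof.
have H : \sum_i ((J i && ~~ J (sc i)) + (J i && ~~ J (pc i))) <=
         \sum_i \sum_j ((J i && ~~ J j && cycle_rel n i j) : nat).
  apply: leq_sum => i _.
  have := sum2_ge (fun j => ((J i && ~~ J j && cycle_rel n i j) : nat)) (sc_pc_neq i).
  have h1 : cycle_rel n i (sc i) by rewrite cycle_relE eqxx.
  have h2 : cycle_rel n i (pc i) by rewrite cycle_relE eqxx orbT.
  by rewrite /= h1 h2 !andbT.
apply: leq_trans H; rewrite big_split /=.
have -> : \sum_i ((J i && ~~ J (pc i)) : nat) = \sum_i ((J (sc i) && ~~ J i) : nat).
  by rewrite -sum_sc; apply: eq_bigr => i _; rewrite scK.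
rewrite -big_split /= /vv; apply: leq_sum => i _.
by case: (J i); case: (J (sc i)).
Qed.

End Cyc.


Lemma sum_card (T : finType) (P : pred T) : \sum_x (P x : nat) = #|P|.
Proof.
rewrite -sum1_card [RHS]big_mkcond; apply: eq_bigr => x _; rewrite unfold_in; by case: (P x).
Qed.

Lemma sum_ind1 (T : finType) (a : T) (F : T -> nat) :
  \sum_x ((x == a) : nat) * F x = F a.
Proof.
rewrite (bigD1 a) //= eqxx mul1n big1 ?addn0 // => x /negbTE ->; by rewrite mul0n.
Qed.

Lemma sum_set1 (T : finType) (a : T) (F : T -> nat) :
  \sum_x ((x \in [set a]) : nat) * F x = F a.
Proof. rewrite -(sum_ind1 a F); apply: eq_bigr => x _; by rewrite in_set1. Qed.

Lemma sum_set2 (T : finType) (a b : T) (F : T -> nat) : a != b ->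
  \sum_x ((x \in [set a; b]) : nat) * F x = F a + F b.
Proof.
move=> ab; rewrite (bigD1 a) //= (bigD1 b) 1?eq_sym //= !inE !eqxx orbT /= !mul1n.
rewrite big1 ?addn0 // => x /andP[xb xa]; by rewrite !inE (negbTE xa) (negbTE xb) mul0n.
Qed.

Lemma sum_ind_le (T : finType) (P : pred T) (F : T -> nat) :
  \sum_x (P x : nat) * F x <= \sum_x F x.
Proof. apply: leq_sum => x _; case: (P x); by rewrite ?mul1n ?mul0n. Qed.

Lemma sum_card_set (T : finType) (A : {set T}) : \sum_x ((x \in A) : nat) = #|A|.
Proof. by rewrite -sum_card. Qed.

Lemma nat_pt_leI (I : finType) (P : pred I) (F G : I -> nat) : (forall x, P x -> F x <= G x) ->
  \sum_x (P x : nat) * F x <= \sum_x (P x : nat) * G x.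
Proof. move=> H; apply: leq_sum => x _; case: (boolP (P x)) => px; rewrite ?mul0n ?mul1n //; exact: H. Qed.

Section G.
Variables (T : finType) (e : rel T) (n : nat).
Hypothesis esym : symmetric e.
Hypothesis eirr : irreflexive e.
Hypothesis n3 : 3 <= n.

Local Notation V := (T * 'I_n)%type.
Local Notation h := (strong_prod e (cycle_rel n)).

Lemma h_sym : symmetric h.
Proof.
move=> [a i] [b j]; rewrite /strong_prod /=.
have -> : cycle_rel n j i = cycle_rel n i j by rewrite /cycle_rel /= orbC.
by rewrite [(b, j) == _]eq_sym [b == a]eq_sym (esym b a) [j == i]eq_sym.
Qed.

Lemma h_irr : irreflexive h.
Proof. by move=> u; rewrite /strong_prod /= eqxx. Qed.

Definition cross (Z : {set V}) :=
  \sum_u \sum_v (((u \in Z) && (v \notin Z) && h u v) : nat).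

Definition tt (Z : {set V}) a b :=
  \sum_i \sum_j ((((a, i) \in Z) && ((b, j) \notin Z) && h (a, i) (b, j)) : nat).

Definition Jc (Z : {set V}) a : pred 'I_n := fun i => (a, i) \in Z.

Lemma sumV (F : V -> nat) : \sum_u F u = \sum_a \sum_i F (a, i).
Proof. by rewrite pair_bigA; apply: eq_bigr => [[a i]]. Qed.

Lemma cross_tt Z : cross Z = \sum_a \sum_b tt Z a b.
Proof.
rewrite /cross /tt sumV; apply: eq_bigr => a _.
rewrite [RHS]exchange_big /=; apply: eq_bigr => i _.
by rewrite sumV.
Qed.

Lemma hE a i b j : h (a, i) (b, j) =
  ((a, i) != (b, j)) && ((a == b) || e a b) && ((i == j) || cycle_rel n i j).
Proof. by []. Qed.

Lemma tt_self (Z : {set V}) a : vv n3 (Jc Z a) <= tt Z a a.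
Proof.
apply: leq_trans (vv_le n3 _) _; apply: leq_sum => i _; apply: leq_sum => j _.
rewrite hE /Jc eqxx /=.
case Hi: ((a, i) \in Z) => //=; case Hj: ((a, j) \in Z) => //=.
have ne : (a, i) != (a, j) by apply/eqP => E; move: Hj; rewrite -E Hi.
by rewrite ne /=; case: (cycle_rel n i j); rewrite ?orbT.
Qed.

Lemma tt_TT (Z : {set V}) a b : a != b -> e a b -> tt Z a b = TT (Jc Z a) (Jc Z b).
Proof.
move=> ab eab; apply: eq_bigr => i _; apply: eq_bigr => j _.
rewrite hE eab orbT andbT /adj /Jc.
have -> : (a, i) != (b, j) by apply: contra ab => /eqP [-> _].
by [].
Qed.

Lemma c_pair (Z : {set V}) a b : (exists i, (a, i) \in Z) -> (exists j, (a, j) \notin Z) ->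
  e a b -> 3 <= tt Z a b + tt Z b a.
Proof.
move=> h1 h2 eab; have ab : a != b by apply: contraTneq eab => ->; rewrite eirr.
have ba : b != a by rewrite eq_sym.
have eba : e b a by rewrite esym.
rewrite (tt_TT _ ab eab) (tt_TT _ ba eba).
exact: c_ge3.
Qed.

Lemma tt_empty (Z : {set V}) a b : e a b -> (forall j, (b, j) \notin Z) ->
  3 * \sum_i (Jc Z a i : nat) <= tt Z a b.
Proof.
move=> eab hb; have ab : a != b by apply: contraTneq eab => ->; rewrite eirr.
rewrite tt_TT //; exact: TT_empty.
Qed.

Lemma Q_bound (Z : {set V}) (Q : {set T}) :
  \sum_x ((x \in Q) : nat) * tt Z x x
  + \sum_x \sum_b (((x \in Q) && e x b && (b \notin Q)) : nat) * (tt Z x b + tt Z b x)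
  + \sum_x \sum_b (((x \in Q) && (b \in Q) && (b != x)) : nat) * tt Z x b
  <= cross Z.
Proof.
rewrite cross_tt.
have -> : \sum_x \sum_b (((x \in Q) && e x b && (b \notin Q)) : nat) * (tt Z x b + tt Z b x)
  = \sum_a \sum_b (((a \in Q) && e a b && (b \notin Q)) : nat) * tt Z a b
  + \sum_a \sum_b (((b \in Q) && e b a && (a \notin Q)) : nat) * tt Z a b.
  rewrite [X in _ = _ + X]exchange_big -big_split /=; apply: eq_bigr => a _.
  by rewrite -big_split /=; apply: eq_bigr => b _; rewrite mulnDr.
rewrite addnA -!big_split /=; apply: leq_sum => a _.
rewrite -!addnA -!big_split /=.
rewrite [X in _ <= X](bigD1 a) // [X in _ + X <= _](bigD1 a) //=.
rewrite eirr andbF eqxx andbF !mul0n !add0n.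
apply: leq_add; first by case: (a \in Q); rewrite ?mul1n ?mul0n.
apply: leq_sum => b ba; rewrite -!mulnDl.
have -> : (b != a) = true by [].
case: (a \in Q); case: (b \in Q); rewrite /= ?andbF ?andbT ?mul0n ?add0n ?addn0 //.
all: by case: (e a b); case: (e b a); rewrite ?mul1n ?mul0n.
Qed.

Lemma deg_sum x : degree e x = \sum_b (e x b : nat).
Proof. by rewrite /degree cardsE -sum_card. Qed.

Lemma deg_split (Q : {set T}) x :
  degree e x <= \sum_b ((e x b && (b \notin Q)) : nat) + \sum_b ((e x b && (b \in Q)) : nat).
Proof.
rewrite deg_sum -big_split /=; apply: leq_sum => b _.
by case: (e x b); case: (b \in Q).
Qed.

Lemma adjQ_le (Q : {set T}) x :
  \sum_b ((e x b && (b \in Q)) : nat) <= #|Q :\ x|.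
Proof.
rewrite -sum_card_set; apply: leq_sum => b _; rewrite !inE.
case: (boolP (e x b)) => //= exb.
have -> : b != x by apply: contraTneq exb => ->; rewrite eirr.
by [].
Qed.

Definition nonconst (Z : {set V}) x := (exists i, (x, i) \in Z) /\ (exists j, (x, j) \notin Z).

Lemma A_bound (Z : {set V}) (Q : {set T}) : (forall x, x \in Q -> nonconst Z x) ->
  2 * #|Q| <= \sum_x ((x \in Q) : nat) * tt Z x x.
Proof.
move=> HQ; rewrite -sum_card_set big_distrr /=; apply: leq_sum => x _.
case: (boolP (x \in Q)) => xQ /=; rewrite ?muln0 ?mul1n ?muln1 //.
have [h1 h2] := HQ x xQ; apply: leq_trans (tt_self Z x).
exact: vv_ge2.
Qed.

Lemma B_bound (Z : {set V}) (Q : {set T}) : (forall x, x \in Q -> nonconst Z x) ->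
  3 * \sum_x ((x \in Q) : nat) * \sum_b ((e x b && (b \notin Q)) : nat) <=
  \sum_x \sum_b (((x \in Q) && e x b && (b \notin Q)) : nat) * (tt Z x b + tt Z b x).
Proof.
move=> HQ; rewrite big_distrr /=; apply: leq_sum => x _.
case: (boolP (x \in Q)) => xQ /=; rewrite ?mul0n ?muln0 ?mul1n.
  rewrite big_distrr /=; apply: leq_sum => b _.
  case: (boolP (e x b)) => exb; case: (boolP (b \in Q)) => bQ /=; rewrite ?muln0 ?mul1n ?muln1 //.
  by have [h1 h2] := HQ x xQ; apply: c_pair.
by rewrite big1 // => b _; rewrite mul0n.
Qed.

Lemma B_bound_empty (Z : {set V}) (Q : {set T}) :
  (forall b, b \notin Q -> forall j, (b, j) \notin Z) ->
  3 * \sum_x ((x \in Q) : nat) * ((\sum_i (Jc Z x i : nat)) * \sum_b ((e x b && (b \notin Q)) : nat)) <=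
  \sum_x \sum_b (((x \in Q) && e x b && (b \notin Q)) : nat) * (tt Z x b + tt Z b x).
Proof.
move=> HQ; rewrite big_distrr /=; apply: leq_sum => x _.
case: (boolP (x \in Q)) => xQ /=; rewrite ?mul0n ?muln0 ?mul1n.
  rewrite mulnA big_distrr /=; apply: leq_sum => b _.
  case: (boolP (e x b)) => exb; case: (boolP (b \in Q)) => bQ /=; rewrite ?muln0 ?mul1n ?muln1 //.
  apply: leq_trans (leq_addr (tt Z b x) _).
  by apply: tt_empty => //; apply: HQ.
by rewrite big1 // => b _; rewrite mul0n.
Qed.

Lemma C_bound (Z : {set V}) (Q : {set T}) : (forall x, x \in Q -> nonconst Z x) ->
  (forall x y, x \in Q -> y \in Q -> x != y -> e x y) ->
  3 * (#|Q| * (#|Q| - 1)) <=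
  2 * \sum_x \sum_b (((x \in Q) && (b \in Q) && (b != x)) : nat) * tt Z x b.
Proof.
move=> HQ Hcl.
have E : \sum_x \sum_b (((x \in Q) && (b \in Q) && (b != x)) : nat) * tt Z x b =
         \sum_x \sum_b (((x \in Q) && (b \in Q) && (b != x)) : nat) * tt Z b x.
  rewrite exchange_big; apply: eq_bigr => x _; apply: eq_bigr => b _.
  by rewrite [x == b]eq_sym; case: (x \in Q); case: (b \in Q).
rewrite mul2n -addnn {2}E -big_split /=.
have -> : #|Q| * (#|Q| - 1) = \sum_x ((x \in Q) : nat) * (#|Q| - 1).
  by rewrite -big_distrl /= sum_card_set.
rewrite big_distrr /=; apply: leq_sum => x _.
case: (boolP (x \in Q)) => xQ /=; last by rewrite mul0n muln0.
rewrite mul1n -big_split /=.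
have -> : #|Q| - 1 = \sum_b (((b \in Q) && (b != x)) : nat).
  rewrite (cardsD1 x Q) xQ add1n subn1 /= -sum_card_set.
  by apply: eq_bigr => b _; rewrite !inE andbC.
rewrite big_distrr /=; apply: leq_sum => b _.
case: (boolP (b \in Q)) => bQ; case: (boolP (b != x)) => bx /=; rewrite ?muln0 ?mul0n //.
rewrite ?muln1 ?mul1n.
by have [h1 h2] := HQ x xQ; apply: c_pair => //; apply: Hcl => //; rewrite eq_sym.
Qed.

Lemma nat_pt_le (P : pred T) (F G : T -> nat) : (forall x, P x -> F x <= G x) ->
  \sum_x (P x : nat) * F x <= \sum_x (P x : nat) * G x.
Proof. move=> H; apply: leq_sum => x _; case: (boolP (P x)) => px; rewrite ?mul0n ?mul1n //; exact: H. Qed.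

Lemma adjQ0 (Q : {set T}) x : (forall b, b \in Q -> ~~ e x b) ->
  \sum_b ((e x b && (b \in Q)) : nat) = 0.
Proof.
move=> H; apply: big1 => b _; case: (boolP (b \in Q)) => bQ; rewrite ?andbF //.
by rewrite (negbTE (H b bQ)).
Qed.

Lemma NA_bound (Z : {set V}) delta x y : (forall w, delta <= degree e w) ->
  nonconst Z x -> nonconst Z y -> x != y -> ~~ e x y -> 6 * delta + 4 <= cross Z.
Proof.
move=> Hd hx hy xy nexy.
set Q := [set x; y].
have HQ : forall w, w \in Q -> nonconst Z w by move=> w; rewrite !inE => /orP[] /eqP ->.
have := Q_bound Z Q; have := A_bound HQ; have := B_bound HQ.
rewrite cards2 xy sum_set2 //.
have ex : degree e x <= \sum_b ((e x b && (b \notin Q)) : nat).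
  have := deg_split Q x; rewrite adjQ0 ?addn0 // => b; rewrite !inE => /orP[] /eqP ->.
    by rewrite eirr.
  by [].
have ey : degree e y <= \sum_b ((e y b && (b \notin Q)) : nat).
  have := deg_split Q y; rewrite adjQ0 ?addn0 // => b; rewrite !inE => /orP[] /eqP ->.
    by rewrite esym.
  by rewrite eirr.
have := Hd x; have := Hd y; lia.
Qed.

Lemma TRI_bound (Z : {set V}) delta x y w : (forall v, delta <= degree e v) ->
  nonconst Z x -> nonconst Z y -> nonconst Z w ->
  e x y -> e x w -> e y w -> 6 * delta + 3 <= cross Z.
Proof.
move=> Hd hx hy hw exy exw eyw.
have ne : forall a b, e a b -> a != b by move=> a b eab; apply: contraTneq eab => ->; rewrite eirr.
set Q := x |: [set y; w].
have memQ : forall v, v \in Q = [|| v == x, v == y | v == w] by move=> v; rewrite !inE.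
have HQ : forall v, v \in Q -> nonconst Z v by move=> v; rewrite memQ => /or3P[] /eqP ->.
have Hcl : forall a b, a \in Q -> b \in Q -> a != b -> e a b.
  move=> a b; rewrite !memQ => /or3P[] /eqP -> /or3P[] /eqP ->; rewrite ?eqxx // => _;
  by rewrite // esym.
have cQ : #|Q| = 3.
  rewrite /Q cardsU1 cards2 (ne _ _ eyw) !inE negb_or (ne _ _ exy) (ne _ _ exw).
  by [].
have := Q_bound Z Q; have := A_bound HQ; have := C_bound HQ Hcl; have := B_bound HQ.
rewrite cQ.
set M := maxn delta 2.
have Hext : #|Q| * M <= \sum_v ((v \in Q) : nat) * (\sum_b ((e v b && (b \notin Q)) : nat) + 2).
  rewrite -sum_card_set big_distrl /=; apply: (nat_pt_le (P := fun v => v \in Q)) => v vQ.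
  apply: leq_trans (_ : degree e v <= _).
    rewrite geq_max Hd /=.
    have [a [b [ab eva evb]]] : exists a b, [/\ a != b, e v a & e v b].
      move: vQ; rewrite memQ => /or3P[] /eqP ->.
      - by exists y, w; rewrite exy exw (ne _ _ eyw).
      - by exists x, w; rewrite esym exy eyw (ne _ _ exw).
      - by exists x, y; rewrite esym exw esym eyw (ne _ _ exy).
    rewrite /degree; apply: leq_trans (subset_leq_card (_ : [set a; b] \subset _)).
      by rewrite cards2 ab.
    by apply/subsetP => c; rewrite !inE => /orP[] /eqP ->; rewrite ?eva ?evb.
  apply: leq_trans (deg_split Q v) _; rewrite leq_add2l.
  apply: leq_trans (adjQ_le Q v) _.
  by move: (cardsD1 v Q); rewrite vQ cQ /=; lia.
have E2 : \sum_v ((v \in Q) : nat) * (\sum_b ((e v b && (b \notin Q)) : nat) + 2) =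
  \sum_v ((v \in Q) : nat) * \sum_b ((e v b && (b \notin Q)) : nat) + 2 * 3.
  rewrite -cQ -sum_card_set big_distrr -big_split /=; apply: eq_bigr => v _.
  by rewrite mulnDr [2 * _]mulnC.
move: Hext; rewrite E2 cQ.
move=> Hext HB HC HA HQb.
have : 9 * M <= 3 * \sum_v ((v \in Q) : nat) * \sum_b ((e v b && (b \notin Q)) : nat) + 18.
  lia.
have : 6 * delta <= 9 * M - 9 + 6 by rewrite /M; lia.
lia.
Qed.

Lemma J_pos (Z : {set V}) x : (exists i, (x, i) \in Z) -> 1 <= \sum_i (Jc Z x i : nat).
Proof. by move=> [i hi]; rewrite (bigD1 i) //= /Jc hi. Qed.

Lemma PAIR_bound (Z : {set V}) delta x y : (forall v, delta <= degree e v) ->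
  (forall v, 0 < degree e v) ->
  nonconst Z x -> nonconst Z y -> e x y ->
  (forall v i, (v, i) \in Z -> v = x \/ v = y) -> 3 <= #|Z| ->
  ~ (degree e x = 1 /\ degree e y = 1) -> 6 * delta + 3 <= cross Z.
Proof.
move=> Hd Hpos hx hy exy Hxy HZ Hk2.
have xy : x != y by apply: contraTneq exy => ->; rewrite eirr.
set Q := [set x; y].
have HQ : forall w, w \in Q -> nonconst Z w by move=> w; rewrite !inE => /orP[] /eqP ->.
have Hcl : forall a b, a \in Q -> b \in Q -> a != b -> e a b.
  move=> a b; rewrite !inE => /orP[] /eqP -> /orP[] /eqP ->; rewrite ?eqxx // => _.
  by rewrite esym.
have Hemp : forall b, b \notin Q -> forall j, (b, j) \notin Z.
  move=> b bQ j; apply/negP => bj; move: bQ; rewrite !inE.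
  by case: (Hxy _ _ bj) => ->; rewrite eqxx ?orbT.
have := Q_bound Z Q; have := A_bound HQ; have := C_bound HQ Hcl; have := B_bound_empty Hemp.
rewrite cards2 xy sum_set2 //.
have ex : degree e x <= \sum_b ((e x b && (b \notin Q)) : nat) + 1.
  apply: leq_trans (deg_split Q x) _; rewrite leq_add2l; apply: leq_trans (adjQ_le Q x) _.
  by move: (cardsD1 x Q); rewrite cards2 xy !inE eqxx /=; lia.
have ey : degree e y <= \sum_b ((e y b && (b \notin Q)) : nat) + 1.
  apply: leq_trans (deg_split Q y) _; rewrite leq_add2l; apply: leq_trans (adjQ_le Q y) _.
  by move: (cardsD1 y Q); rewrite cards2 xy !inE eqxx orbT /=; lia.
have jx := J_pos hx.1; have jy := J_pos hy.1.
have jxy : 3 <= \sum_i (Jc Z x i : nat) + \sum_i (Jc Z y i : nat).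
  rewrite !sum_card; apply: leq_trans HZ _.
  apply: leq_trans (subset_leq_card (_ : Z \subset [set (x, i) | i in Jc Z x] :|: [set (y, i) | i in Jc Z y])) _.
    apply/subsetP => [[v i]] vi; rewrite inE; case: (Hxy _ _ vi) => ev; subst v.
      by apply/orP; left; apply/imsetP; exists i.
    by apply/orP; right; apply/imsetP; exists i.
  by apply: leq_trans (leq_card_setU _ _) _; apply: leq_add; apply: leq_imset_card.
have dx := Hd x; have dy := Hd y; have px := Hpos x; have py := Hpos y.
move: Hk2; set jX := \sum_i (Jc Z x i : nat); set jY := \sum_i (Jc Z y i : nat).
set eX := \sum_b ((e x b && (b \notin Q)) : nat); set eY := \sum_b ((e y b && (b \notin Q)) : nat).
move=> Hk2 HB HC HA HQb.
have h1 : eX <= jX * eX by rewrite leq_pmull.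
have h2 : eY <= jY * eY by rewrite leq_pmull.
case: (leqP 2 jX) => [j2|j1].
  have h3 : 2 * eX <= jX * eX by rewrite leq_mul2r j2 orbT.
  have : (degree e x = 1 /\ degree e y = 1) \/ (2 <= degree e x) \/ (2 <= degree e y) by lia.
  case=> [//|]; lia.
have j2 : 2 <= jY by lia.
have h3 : 2 * eY <= jY * eY by rewrite leq_mul2r j2 orbT.
have : (degree e x = 1 /\ degree e y = 1) \/ (2 <= degree e x) \/ (2 <= degree e y) by lia.
case=> [//|]; lia.
Qed.

Lemma SINGLE_bound (Z : {set V}) delta a : (forall v, delta <= degree e v) ->
  (forall v, 0 < degree e v) -> nonconst Z a ->
  (forall v i, (v, i) \in Z -> v = a) -> 3 <= #|Z| -> 6 * delta + 3 <= cross Z.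
Proof.
move=> Hd Hpos ha Ha HZ.
set Q := [set a].
have HQ : forall w, w \in Q -> nonconst Z w by move=> w; rewrite !inE => /eqP ->.
have Hemp : forall b, b \notin Q -> forall j, (b, j) \notin Z.
  move=> b bQ j; apply/negP => bj; move: bQ; rewrite !inE.
  by rewrite (Ha _ _ bj) eqxx.
have := Q_bound Z Q; have := A_bound HQ; have := B_bound_empty Hemp.
rewrite cards1 sum_set1.
have ex : degree e a <= \sum_b ((e a b && (b \notin Q)) : nat).
  have := deg_split Q a; rewrite adjQ0 ?addn0 // => b; rewrite !inE => /eqP ->.
  by rewrite eirr.
have ja : 3 <= \sum_i (Jc Z a i : nat).
  rewrite sum_card; apply: leq_trans HZ _.
  apply: leq_trans (subset_leq_card (_ : Z \subset [set (a, i) | i in Jc Z a])) _.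
    apply/subsetP => [[v i]] vi; have ev := Ha _ _ vi; subst v.
    by apply/imsetP; exists i.
  exact: leq_imset_card.
have dx := Hd a; have px := Hpos a.
set jA := \sum_i (Jc Z a i : nat).
set eA := \sum_b ((e a b && (b \notin Q)) : nat).
move=> HB HA HQb.
have : 3 * eA <= jA * eA by rewrite leq_mul2r ja orbT.
lia.
Qed.

Lemma L2 (Z : {set V}) delta : (forall v, delta <= degree e v) ->
  (forall v, 0 < degree e v) ->
  (forall a b, e a b -> degree e a = 1 -> degree e b = 1 -> False) ->
  3 <= #|Z| -> (forall a, exists i, (a, i) \notin Z) -> 6 * delta + 3 <= cross Z.
Proof.
move=> Hd Hpos Hk2 HZ Hcol.
have NC : forall v i, (v, i) \in Z -> nonconst Z v.
  by move=> v i vi; split; [exists i | exact: Hcol].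
have [[a i0] ai0] : exists z, z \in Z by apply/card_gt0P; apply: leq_trans HZ.
have NA' : forall x y, nonconst Z x -> nonconst Z y -> x != y -> ~~ e x y -> 6 * delta + 3 <= cross Z.
  by move=> x y hx hy xy nxy; have := NA_bound Hd hx hy xy nxy; lia.
case: (pickP (fun v => [exists i, (v, i) \in Z] && (v != a))) => [a' /andP[/existsP[i' ha'] a'a] | H].
  case: (boolP (e a a')) => eaa'; last first.
    by apply: (NA' a a' (NC _ _ ai0) (NC _ _ ha')) => //; rewrite eq_sym.
  case: (pickP (fun v => [exists i, (v, i) \in Z] && (v != a) && (v != a'))) =>
    [a'' /andP[/andP[/existsP[i'' ha''] a''a] a''a'] | H2].
    case: (boolP (e a a'')) => eaa''; last first.
      by apply: (NA' a a'' (NC _ _ ai0) (NC _ _ ha'')) => //; rewrite eq_sym.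
    case: (boolP (e a' a'')) => ea'a''; last first.
      by apply: (NA' a' a'' (NC _ _ ha') (NC _ _ ha'')) => //; rewrite eq_sym.
    exact: (TRI_bound Hd (NC _ _ ai0) (NC _ _ ha') (NC _ _ ha'')).
  apply: (PAIR_bound Hd Hpos (NC _ _ ai0) (NC _ _ ha') eaa') => //.
    move=> v i vi; have := H2 v; rewrite /=.
    have -> : [exists i, (v, i) \in Z] by apply/existsP; exists i.
    by case: eqP => [->|_]; [left | case: eqP => [->|_] //; right].
  by move=> [d1 d2]; apply: (Hk2 a a').
apply: (SINGLE_bound Hd Hpos (NC _ _ ai0)) => // v i vi.
have := H v; rewrite /=.
have -> : [exists i, (v, i) \in Z] by apply/existsP; exists i.
by case: eqP.
Qed.

Definition gcut (A : pred T) := \sum_a \sum_b ((A a && ~~ A b && e a b) : nat).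

Lemma bigmin_le (I : finType) (P : pred I) (F : I -> nat) m i : P i ->
  \big[minn/m]_(j | P j) F j <= F i.
Proof.
move=> Pi; have : i \in index_enum I by rewrite mem_index_enum.
elim: (index_enum I) => //= k r IH; rewrite inE big_cons.
case/orP => [/eqP <-|ir]; first by rewrite Pi geq_minl.
case: (P k) => //; last exact: IH.
by rewrite geq_min (IH ir) orbT.
Qed.

Lemma EC_le (A : pred T) x y : A x -> ~~ A y -> edge_conn e <= gcut A.
Proof.
move=> Ax Ay.
set C := [set p : T * T | A p.1 && ~~ A p.2 && e p.1 p.2].
set S' := [set [set p.1; p.2] | p in C].
have cut : is_edge_cut e S'.
  apply/andP; split.
    apply/subsetP => s /imsetP [p]; rewrite inE => /andP[_ ep] ->.
    by rewrite /edges; apply/imsetP; exists p; rewrite ?inE.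
  apply/negP => /forallP /(_ x) /forallP /(_ y) /connectP [p pth ey].
  have : A (last x p).
    elim: p x Ax pth {ey} => //= c p IH z Az /andP[dzc pth]; apply: IH pth.
    move: dzc; rewrite /del_edges /= => /andP[ezc nS].
    apply/negPn/negP => Ac; move/negP: nS; apply; apply/imsetP; exists (z, c) => //.
    by rewrite inE /= Az Ac ezc.
  by rewrite -ey (negbTE Ay).
apply: leq_trans (bigmin_le _ _ cut) _.
apply: leq_trans (leq_imset_card _ _) _.
rewrite /C cardsE -sum_card /gcut pair_bigA /=; apply: eq_leq; apply: eq_bigr => [[a b]] _.
by [].
Qed.

Definition sl (Z : {set V}) i j :=
  \sum_a \sum_b ((((a, i) \in Z) && ((b, j) \notin Z) && h (a, i) (b, j)) : nat).



Lemma cross_sl Z : cross Z = \sum_i \sum_j sl Z i j.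
Proof.
rewrite /cross sumV exchange_big /=; apply: eq_bigr => i _.
rewrite (eq_bigr (fun a => \sum_j \sum_b ((((a, i) \in Z) && ((b, j) \notin Z) && h (a, i) (b, j)) : nat))); last first.
  by move=> a _; rewrite sumV exchange_big.
by rewrite exchange_big.
Qed.

Lemma sl_self (Z : {set V}) i : gcut (fun a => (a, i) \in Z) <= sl Z i i.
Proof.
apply: leq_sum => a _; apply: leq_sum => b _.
rewrite hE /=; case: (boolP (e a b)) => eab; rewrite ?andbF //= orbT andbT.
have ab : a != b by apply: contraTneq eab => ->; rewrite eirr.
have -> : (a, i) != (b, i) by apply: contra ab => /eqP [->].
by rewrite eqxx /= !andbT.
Qed.

Lemma sl_adj (Z : {set V}) i :
  gcut (fun a => ((a, i) \in Z) && ((a, sc n3 i) \in Z)) +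
  gcut (fun a => ((a, i) \in Z) || ((a, sc n3 i) \in Z)) <= sl Z i (sc n3 i) + sl Z (sc n3 i) i.
Proof.
rewrite /gcut /sl -!big_split /=; apply: leq_sum => a _; rewrite -!big_split /=.
apply: leq_sum => b _.
case: (boolP (e a b)) => eab; rewrite ?andbF //=.
have ab : a != b by apply: contraTneq eab => ->; rewrite eirr.
have h1 : h (a, i) (b, sc n3 i).
  rewrite hE eab orbT cycle_relE eqxx orbT !andbT.
  by apply/negP => /eqP [E _]; rewrite E eqxx in ab.
have h2 : h (a, sc n3 i) (b, i).
  rewrite hE eab orbT cycle_relE scK eqxx !orbT !andbT.
  by apply/negP => /eqP [E _]; rewrite E eqxx in ab.
rewrite h1 h2 !andbT.
by case: ((a, i) \in Z); case: ((b, i) \in Z); case: ((a, sc n3 i) \in Z); case: ((b, sc n3 i) \in Z).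
Qed.

Lemma L3 (Z : {set V}) x y : (forall i, (x, i) \in Z) -> (forall i, (y, i) \notin Z) ->
  3 * n * edge_conn e <= cross Z.
Proof.
move=> Hx Hy; rewrite cross_sl.
set s := sc n3.
have step : \sum_i (sl Z i i + sl Z i (s i) + sl Z (s i) i) <= \sum_i \sum_j sl Z i j.
  have E1 : \sum_i sl Z i i = \sum_i \sum_j ((j == i) : nat) * sl Z i j.
    by apply: eq_bigr => i _; rewrite sum_ind1.
  have E2 : \sum_i sl Z i (s i) = \sum_i \sum_j ((j == s i) : nat) * sl Z i j.
    by apply: eq_bigr => i _; rewrite sum_ind1.
  have E3 : \sum_i sl Z (s i) i = \sum_i \sum_j ((i == s j) : nat) * sl Z i j.
    rewrite [RHS]exchange_big /=; apply: eq_bigr => j _; by rewrite sum_ind1.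
  rewrite !big_split /= E1 E2 E3 -!big_split /=; apply: leq_sum => i _.
  rewrite -!big_split /=; apply: leq_sum => j _; rewrite -!mulnDl.
  case: (j =P i) => [->|ji].
    have -> : (i == s i) = false by apply/negbTE; rewrite eq_sym sc_neq.
    by rewrite /= mul1n.
  case: (j =P s i) => [->|jsi].
    have -> : (i == s (s i)) = false.
      apply/negbTE/eqP => E; have := sc_pc_neq n3 (s i).
      by rewrite -/s -E /s scK eqxx.
    by rewrite mul1n.
  by case: (i == s j); rewrite ?mul1n ?mul0n.
apply: leq_trans step.
have E : \sum_(i < n) (3 * edge_conn e) = 3 * n * edge_conn e by rewrite big_const_ord iter_addn_0; lia.
rewrite -E; apply: leq_sum => i _.
have A1 := EC_le (A := fun a => (a, i) \in Z) (Hx i) (Hy i).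
have A2 := EC_le (A := fun a => ((a, i) \in Z) && ((a, s i) \in Z)) (x := x) (y := y).
have A3 := EC_le (A := fun a => ((a, i) \in Z) || ((a, s i) \in Z)) (x := x) (y := y).
have := sl_self Z i; have := sl_adj Z i; rewrite -/s.
rewrite /= !Hx (negbTE (Hy i)) (negbTE (Hy (s i))) in A2 A3.
move=> H1 H2; have B2 := A2 isT isT; have B3 := A3 isT isT.
have -> : 3 * edge_conn e = edge_conn e + (edge_conn e + edge_conn e) by lia.
rewrite -addnA; apply: leq_trans (leq_add A1 (leq_add B2 B3)) _.
exact: leq_add H2 H1.
Qed.

Lemma bigmin_att (I : finType) (F : I -> nat) m :
  \big[minn/m]_(j : I) F j = m \/ exists j, \big[minn/m]_(j : I) F j = F j.
Proof.
elim: (index_enum I) => [|k r IH]; first by left; rewrite big_nil.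
rewrite big_cons /=; case: IH => [->|[j ->]].
  by rewrite /minn; case: ltnP => _; [right; exists k | left].
by rewrite /minn; case: ltnP => _; right; [exists k | exists j].
Qed.

Lemma mindeg_le x : min_degree e <= degree e x.
Proof. exact: (bigmin_le (P := xpredT)). Qed.

Lemma mindeg_att (x1 : T) : exists x0, degree e x0 = min_degree e.
Proof.
case: (bigmin_att (degree e) #|T|) => [E|[j E]]; last by exists j; rewrite /min_degree E.
exists x1; apply/eqP; rewrite eqn_leq mindeg_le andbT /min_degree E.
by rewrite /degree max_card.
Qed.

Lemma cross_card (X : {set V}) :
  cross X = #|[set p : V * V | (p.1 \in X) && (p.2 \notin X) && h p.1 p.2]|.
Proof.
rewrite cardsE -sum_card /cross pair_bigA /=; apply: eq_bigr => [[u v]] _; by [].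
Qed.

Lemma cross_le_card (X : {set V}) (S : {set {set V}}) :
  (forall u v, u \in X -> v \notin X -> h u v -> [set u; v] \in S) -> cross X <= #|S|.
Proof.
move=> HS; rewrite cross_card.
set C := [set p : V * V | _].
rewrite -(card_in_imset (f := fun p : V * V => [set p.1; p.2])).
  apply: subset_leq_card; apply/subsetP => s /imsetP [p]; rewrite inE => /andP[/andP[p1 p2] hp] ->.
  exact: HS.
move=> [u v] [u' v']; rewrite !inE /= => /andP[/andP[uX vX] _] /andP[/andP[u'X v'X] _] E.
have memE : forall z, (z == u) || (z == v) = (z == u') || (z == v').
  by move=> z; rewrite -!in_set2 E.
have uu : u = u'.
  have H : (u == u') || (u == v') by rewrite -memE eqxx.
  case/orP: H => [/eqP //|/eqP E'].
  by move: v'X; rewrite -E' uX.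
have vv : v = v'.
  have H : (v == u') || (v == v') by rewrite -memE eqxx orbT.
  case/orP: H => [/eqP E'|/eqP //].
  by move: vX; rewrite E' u'X.
by rewrite uu vv.
Qed.

Lemma closed_conn (S : {set {set V}}) (X : {set V}) :
  (forall u v, u \in X -> del_edges h S u v -> v \in X) ->
  forall u v, connect (del_edges h S) u v -> u \in X -> v \in X.
Proof.
move=> HX u v /connectP [p pth ->]; elim: p u pth => //= c p IH u /andP[uc pth] uX.
by apply: (IH c pth); apply: HX uc.
Qed.

Lemma pneq1 (a b : T) (i j : 'I_n) : a != b -> (a, i) != (b, j).
Proof. by move=> ab; apply: contra ab => /eqP E; have := congr1 fst E => /= ->. Qed.

Lemma pneq2 (a b : T) (i j : 'I_n) : i != j -> (a, i) != (b, j).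
Proof. by move=> ij; apply: contra ij => /eqP E; have := congr1 snd E => /= ->. Qed.

Lemma nbhd_card x i : #|[set v | h (x, i) v]| + 1 <= 3 * (degree e x + 1).
Proof.
set N := x |: [set y | e x y].
set W := i |: (sc n3 i |: [set pc n3 i]).
have cN : #|N| = degree e x + 1 by rewrite cardsU1 inE eirr add1n addn1.
have cW : #|W| <= 3.
  rewrite !cardsU1 cards1; by case: (_ \notin _); case: (_ \notin _).
have sub : (x, i) |: [set v | h (x, i) v] \subset setX N W.
  apply/subsetP => [[b j]]; rewrite !inE => /orP[/eqP [-> ->]|].
    by rewrite !eqxx.
  rewrite hE /= => /andP[/andP[_ xb] ij].
  apply/andP; split; first by move: xb; rewrite eq_sym.
  by move: ij; rewrite cycle_relE eq_sym.
have := subset_leq_card sub; rewrite cardsX cardsU1 inE h_irr cN add1n addnC.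
move=> H; rewrite addn1; apply: (leq_trans H); by rewrite mulnC leq_mul2r cW orbT.
Qed.

Lemma cross_pt (P : {set V}) :
  cross P = \sum_u ((u \in P) : nat) * #|[set v | (v \notin P) && h u v]|.
Proof.
apply: eq_bigr => u _; rewrite cardsE -sum_card big_distrr /=; apply: eq_bigr => v _.
by case: (u \in P); rewrite ?mul1n ?mul0n.
Qed.

Lemma cross_compl (X : {set V}) : cross (~: X) = cross X.
Proof.
rewrite /cross exchange_big; apply: eq_bigr => u _; apply: eq_bigr => v _.
by rewrite !inE negbK h_sym; case: (u \in X); case: (v \in X).
Qed.

Lemma first_step (D : rel V) (w y : V) : irreflexive D -> y != w -> connect D w y ->
  exists2 c, D w c & connect D c y.
Proof.
move=> Dirr yw /connectP [[|c p]] /=; first by move=> _ E; rewrite E eqxx in yw.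
by case/andP => Dwc pth E; exists c => //; apply/connectP; exists p.
Qed.

Section Conn.
Hypothesis Hconn : connectedb e.
Hypothesis HT : 1 < #|T|.

Lemma other_ex (x : T) : exists y, y != x.
Proof.
case: (pickP (fun y => y != x)) => [y hy|H]; first by exists y.
have : #|T| <= 1.
  rewrite -(card1 x); apply: subset_leq_card; apply/subsetP => y _.
  by rewrite inE; have := H y; rewrite /= => /negbFE.
by rewrite leqNgt HT.
Qed.

Lemma nbr_ex x : exists y, e x y.
Proof.
have [z zx] := other_ex x.
have : connect e x z by move/forallP: Hconn => /(_ x) /forallP /(_ z).
case/connectP => [[|c p]] /=; first by move=> _ E; rewrite E eqxx in zx.
by case/andP => exc _ _; exists c.
Qed.

Lemma deg_pos x : 0 < degree e x.
Proof. have [y xy] := nbr_ex x; apply/card_gt0P; exists y; by rewrite inE. Qed.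

Lemma mindeg_pos : 0 < min_degree e.
Proof.
have [x1 _] : exists x : T, x \in T by apply/card_gt0P; apply: ltnW.
have [x0 <-] := mindeg_att x1; exact: deg_pos.
Qed.

Lemma deg1_nbr a b y : degree e a = 1 -> e a b -> e a y -> y = b.
Proof.
move=> da eab eay; case: (eqVneq y b) => // yb.
have : #|[set y; b]| <= degree e a.
  rewrite /degree; apply: subset_leq_card; apply/subsetP => c.
  by rewrite !inE => /orP[] /eqP ->; rewrite ?eab ?eay.
by rewrite cards2 yb da.
Qed.

Lemma noK2 : 6 * min_degree e + 2 < 2 * (#|T| + 2 * num_edges e) ->
  forall a b, e a b -> degree e a = 1 -> degree e b = 1 -> False.
Proof.
move=> H a b eab da db.
have eba : e b a by rewrite esym.
have cl : forall z, connect e a z -> (z == a) || (z == b).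
  move=> z /connectP [p pth ->]; elim: p a b eab eba da db pth => [|c p IH] x y exy eyx dx dy /=.
    by rewrite eqxx.
  case/andP => exc pth.
  have cy : c = y by apply: deg1_nbr exc.
  subst c; have := IH y x eyx exy dy dx pth; by rewrite orbC.
have cT : #|T| <= 2.
  rewrite -cardsT; apply: leq_trans (subset_leq_card (_ : [set: T] \subset [set a; b])) _.
    apply/subsetP => z _; rewrite !inE; apply: cl.
    by move/forallP: Hconn => /(_ a) /forallP /(_ z).
  by rewrite cards2; case: (a != b).
have cE : num_edges e <= 1.
  rewrite /num_edges -(cards1 [set a; b]); apply: subset_leq_card.
  apply/subsetP => s /imsetP [[u v] /=]; rewrite inE /= => euv ->.
  have hu : (u == a) || (u == b) by apply: cl; move/forallP: Hconn => /(_ a) /forallP /(_ u).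
  have hv : (v == a) || (v == b) by apply: cl; move/forallP: Hconn => /(_ a) /forallP /(_ v).
  rewrite inE; case/orP: hu => /eqP hu; case/orP: hv => /eqP hv; subst u v.
  - by rewrite eirr in euv.
  - by [].
  - by rewrite setUC.
  - by rewrite eirr in euv.
have := mindeg_le a; have := mindeg_pos; rewrite da; lia.
Qed.

Lemma S0_ex : exists S0 : {set {set V}},
  is_restricted_edge_cut h S0 /\ #|S0| <= 6 * min_degree e + 2.
Proof.
have [x1 _] : exists x : T, x \in T by apply/card_gt0P; apply: ltnW.
have [x0 dx0] := mindeg_att x1.
set i0 : 'I_n := Ordinal (n_pos n3).
set i1 := sc n3 i0.
set P := [set (x0, i0); (x0, i1)].
set C0 := [set p : V * V | (p.1 \in P) && (p.2 \notin P) && h p.1 p.2].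
set S0 := [set [set p.1; p.2] | p in C0].
have i01 : i0 != i1 by rewrite eq_sym sc_neq.
have h01 : h (x0, i0) (x0, i1).
  by rewrite hE eqxx /= cycle_relE eqxx orbT !andbT pneq2.
have cutP : forall u v, u \in P -> v \notin P -> h u v -> [set u; v] \in S0.
  by move=> u v uP vP huv; apply/imsetP; exists (u, v) => //; rewrite inE /= uP vP huv.
have notS0 : forall u v, (u \in P) = (v \in P) -> [set u; v] \notin S0.
  move=> u v uv; apply/negP => /imsetP [[u' v']]; rewrite inE /= => /andP[/andP[u'P v'P] _] E.
  have Hu' : u' \in [set u; v] by rewrite E !inE eqxx.
  have Hv' : v' \in [set u; v] by rewrite E !inE eqxx orbT.
  move: Hu' Hv'; rewrite !in_set2 => /orP[] /eqP Eu /orP[] /eqP Ev;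
    by move: u'P v'P; rewrite Eu Ev ?uv => ->.
exists S0; split; last first.
  apply: leq_trans (leq_imset_card _ _) _; rewrite -cross_card cross_pt.
  apply: leq_trans (_ : \sum_u ((u \in P) : nat) * (3 * min_degree e + 1) <= _).
    apply: (nat_pt_leI (P := fun u => u \in P)) => u uP.
    have [u' [u'P hu]] : exists u', u' \in P /\ h u u'.
      move: uP; rewrite !inE => /orP[] /eqP ->.
        by exists (x0, i1); rewrite !inE eqxx orbT.
      by exists (x0, i0); rewrite !inE eqxx h_sym.
    have Hsub : u' |: [set v | (v \notin P) && h u v] \subset [set v | h u v].
      by apply/subsetP => v; rewrite !inE => /orP[/eqP ->|/andP[_ ->]].
    have := subset_leq_card Hsub; rewrite cardsU1 inE u'P /= add1n.
    have : u.1 = x0 by move: uP; rewrite !inE => /orP[] /eqP ->.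
    case: u hu Hsub uP => [b j] /= hu Hsub uP Eb; subst b.
    have := nbhd_card x0 j; rewrite dx0 => H1 H2; rewrite -ltnS; apply: (leq_trans H2).
    rewrite -(leq_add2r 1); apply: (leq_trans H1); lia.
  rewrite -big_distrl /= sum_card_set cards2 /=.
  by case: (_ != _); lia.
apply/andP; split.
  apply/andP; split.
    apply/subsetP => s /imsetP [p]; rewrite inE => /andP[_ ep] ->.
    by rewrite /edges; apply/imsetP; exists p; rewrite ?inE.
  have [y0 y0x] := other_ex x0.
  apply/negP => /forallP /(_ (x0, i0)) /forallP /(_ (y0, i0)) Hc.
  have : (y0, i0) \in P.
    apply: (closed_conn (X := P) _ Hc); last by rewrite !inE eqxx.
    move=> u v uP; rewrite /del_edges /= => /andP[huv nS].
    by apply/negPn/negP => vP; move/negP: nS; apply; apply: cutP.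
  by rewrite !inE => /orP[] /eqP /(congr1 fst) /= E; rewrite E eqxx in y0x.
apply/forallP => w; apply/existsP.
case: (boolP (w \in P)) => wP.
  have [w' [w'w w'P hw]] : exists w', [/\ w' != w, w' \in P & h w w'].
    move: wP; rewrite !inE => /orP[] /eqP ->.
      by exists (x0, i1); rewrite !inE eqxx orbT; split => //; rewrite pneq2 // eq_sym.
    exists (x0, i0); rewrite !inE eqxx h_sym; split => //.
    by rewrite pneq2.
  exists w'; rewrite w'w /=; apply: connect1; rewrite /del_edges /= hw /=.
  by apply: notS0; rewrite wP w'P.
have [w' [w'w w'P hw]] : exists w', [/\ w' != w, w' \notin P & h w w'].
  case: w wP => [b j] wP.
  case: (eqVneq b x0) => [Eb|bx].
    subst b; have [c xc] := nbr_ex x0.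
    have cx : c != x0 by apply: contraTneq xc => ->; rewrite eirr.
    exists (c, j); split.
    - by rewrite pneq1.
    - by rewrite !inE negb_or !pneq1.
    - by rewrite hE xc orbT eqxx /= !andbT pneq1 // eq_sym.
  exists (b, sc n3 j); split.
  - by rewrite pneq2 // sc_neq.
  - by rewrite !inE negb_or !pneq1.
  - by rewrite hE eqxx /= cycle_relE eqxx orbT !andbT pneq2 // eq_sym sc_neq.
exists w'; rewrite w'w /=; apply: connect1; rewrite /del_edges /= hw /=.
by apply: notS0; rewrite (negbTE wP) (negbTE w'P).
Qed.

Lemma main_sec :
  6 * min_degree e + 2 < minn (3 * n * edge_conn e) (2 * (#|T| + 2 * num_edges e)) ->
  super_restricted_edge_connected h.
Proof.
move=> H S HS Hmin.
have H1 : 6 * min_degree e + 2 < 3 * n * edge_conn e by move: H; rewrite leq_min => /andP[].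
have H2 : 6 * min_degree e + 2 < 2 * (#|T| + 2 * num_edges e) by move: H; rewrite leq_min => /andP[].
have [S0 [HS0 cS0]] := S0_ex.
have cS : #|S| <= 6 * min_degree e + 2 := leq_trans (Hmin S0 HS0) cS0.
set D := del_edges h S.
have Dsym : symmetric D.
  move=> u v; rewrite /D /del_edges /= h_sym.
  by have -> : [set v; u] = [set u; v] by rewrite setUC.
have Dirr : irreflexive D by move=> u; rewrite /D /del_edges /= h_irr.
have csym := sym_connect_sym Dsym.
case/andP: HS => /andP[Ssub Sdis] Sres.
case: (boolP [exists x, [exists y, [&& x != y, h x y & [set z | connect D x z] == [set x; y]]]]).
  move/existsP => [x /existsP [y /and3P [xy hxy /eqP E]]].
  by exists x, y; split.
move=> Hno; exfalso.
have comp3 : forall w, 3 <= #|[set z | connect D w z]|.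
  move=> w; move/forallP: Sres => /(_ w) /existsP [y /andP[yw cwy]].
  have sub : [set w; y] \subset [set z | connect D w z].
    by apply/subsetP => z; rewrite !inE => /orP[] /eqP ->.
  have c2 := subset_leq_card sub; rewrite cards2 eq_sym yw in c2.
  rewrite ltnNge; apply/negP => c3.
  have Eq : [set z | connect D w z] = [set w; y].
    apply/eqP; rewrite eq_sym eqEcard sub cards2 eq_sym yw; lia.
  have [c Dwc cy] := first_step Dirr yw cwy.
  have : c \in [set w; y] by rewrite -Eq inE; apply: connect1.
  rewrite !inE => /orP[/eqP cw|/eqP cy'].
    by move: Dwc; rewrite cw Dirr.
  move/negP: Hno; apply; apply/existsP; exists w; apply/existsP; exists y.
  rewrite eq_sym yw Eq eqxx andbT /=.
  by move: Dwc; rewrite cy' /D /del_edges /= => /andP[].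
have [x1 _] : exists x : T, x \in T by apply/card_gt0P; apply: ltnW.
set z0 : V := (x1, Ordinal (n_pos n3)).
set X := [set z | connect D z0 z].
have cX : 3 <= #|X| := comp3 z0.
have cXS : cross X <= #|S|.
  apply: cross_le_card => u v uX vX huv.
  apply/negPn/negP => nS; move/negP: vX; apply; move: uX; rewrite !inE => uX.
  by apply: connect_trans uX (connect1 _); rewrite /D /del_edges /= huv.
have [w wX] : exists w, w \notin X.
  move: Sdis; rewrite negb_forall => /existsP [a]; rewrite negb_forall => /existsP [b nab].
  case: (boolP (a \in X)) => aX; last by exists a.
  exists b; apply/negP; rewrite inE => zb; move/negP: nab; apply.
  rewrite inE in aX; apply: connect_trans _ zb; by rewrite csym.
have cXc : 3 <= #|~: X|.
  apply: leq_trans (comp3 w) _; apply: subset_leq_card; apply/subsetP => v.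
  rewrite !inE => wv; apply/negP => z0v; move/negP: wX; apply; rewrite inE.
  by apply: connect_trans z0v _; rewrite csym.
have Hd := mindeg_le.
have Hpos := deg_pos.
have Hk2 := noK2 H2.
case: (boolP [exists a, [forall i, (a, i) \in X]]) => [/existsP [a /forallP Ha]| Hna].
  case: (boolP [exists b, [forall i, (b, i) \notin X]]) => [/existsP [b /forallP Hb] | Hnb].
    have := L3 Ha Hb; lia.
  have Hcol : forall b, exists i, (b, i) \notin ~: X.
    move=> b; move: Hnb; rewrite negb_exists => /forallP /(_ b); rewrite negb_forall.
    by move=> /existsP [i]; rewrite negbK => bi; exists i; rewrite inE negbK.
  have := L2 Hd Hpos Hk2 cXc Hcol; rewrite cross_compl; lia.
have Hcol : forall b, exists i, (b, i) \notin X.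
  move=> b; move: Hna; rewrite negb_exists => /forallP /(_ b); rewrite negb_forall.
  by move=> /existsP [i] bi; exists i.
have := L2 Hd Hpos Hk2 cX Hcol; lia.
Qed.

End Conn.

End G.

Unset Implicit Arguments.

Theorem corollary3p6 (T : finType) (e : rel T) (n : nat) :
  simple_graph e -> connectedb e -> 1 < #|T| -> 3 <= n ->
  6 * min_degree e + 2 < minn (3 * n * edge_conn e) (2 * (#|T| + 2 * num_edges e)) ->
  super_restricted_edge_connected (strong_prod e (cycle_rel n)).
Proof.
move=> [esym eirr] Hc HT n3 H.
exact: (main_sec esym eirr n3 Hc HT H).
Qed.
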